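(* Let ${\tt G}$ be a connected digraph with exactly $n$ edges. If the path poset $P({\tt G})$ has a maximum, then $P({\tt G})\cong\mathbb B(n)$ as posets and ${\tt G}\cong{\tt I}_n$. In particular, a connected digraph has a Boolean path poset if and only if it is isomorphic to ${\tt I}_n$ for some $n$.
   Context: A digraph ${\tt G}=(V,E)$ has finite $V$ and $E\subseteq (V\times V)\setminus\{(v,v)\}$; connected means the underlying undirected graph is connected; isomorphism is an isomorphism in the category of digraphs with injective edge-preserving vertex maps. A multipath of ${\tt G}$ is a spanning subgraph (all vertices, subset of edges) each of whose components is an isolated vertex or a simple directed path (edges $e_1,\dots,e_k$ with target of $e_i$ equal to source of $e_{i+1}$, no repeated vertex, not a cycle); the path poset $P({\tt G})$ is the set of multipaths ordered by inclusion of edge sets. $\mathbb B(n)$ is the power set of $\{0,\dots,n-1\}$ ordered by inclusion; a Boolean poset is one isomorphic to the power set of a finite set. ${\tt I}_n$ is the digraph with vertices $v_0,\dots,v_n$ and edges $(v_{i-1},v_i)$, $i=1,\dots,n$. *)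

(* Defs.v *)
From mathcomp Require Import all_boot.
Set Implicit Arguments. Unset Strict Implicit. Unset Printing Implicit Defensive.

(* A digraph is given by a finite vertex type V and an edge set
   E : {set V * V} with no loops (e.1 != e.2 for every e \in E). *)
Definition loopless (V : finType) (E : {set V * V}) : Prop :=
  forall e, e \in E -> e.1 != e.2.

Definition undir (V : finType) (E : {set V * V}) : rel V :=
  fun u v => ((u, v) \in E) || ((v, u) \in E).

Definition connected_digraph (V : finType) (E : {set V * V}) : Prop :=
  0 < #|V| /\ forall u v : V, connect (undir E) u v.

Definition component (V : finType) (F : {set V * V}) (v : V) : {set V} :=
  [set w | connect (undir F) v w].

(* the component C of (V,F) is an isolated vertex (s of size 1) or a simple
   directed path: its vertices are listed without repetition by s, and the
   edges of F inside C are exactly the consecutive pairs of s. *)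
Definition path_component (V : finType) (F : {set V * V}) (C : {set V}) : Prop :=
  exists s : seq V,
    [/\ 0 < size s, uniq s, [set x in s] = C &
        forall e : V * V, (e \in F) && (e.1 \in C) && (e.2 \in C) =
                           (e \in zip s (behead s))].

Definition multipath (V : finType) (E F : {set V * V}) : Prop :=
  F \subset E /\ forall v : V, path_component F (component F v).

(* the path poset P(G): multipaths ordered by inclusion of edge sets *)
Definition path_poset (V : finType) (E : {set V * V}) :=
  {F : {set V * V} | multipath E F}.

Definition pp_le (V : finType) (E : {set V * V}) (x y : path_poset E) : Prop :=
  proj1_sig x \subset proj1_sig y.

Definition has_maximum (V : finType) (E : {set V * V}) : Prop :=
  exists M : path_poset E, forall F : path_poset E, pp_le F M.

(* poset isomorphism P(G) ~= B(n), where B(n) = {set 'I_n} ordered by \subset *)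
Definition iso_Boolean (V : finType) (E : {set V * V}) (n : nat) : Prop :=
  exists f : path_poset E -> {set 'I_n},
    bijective f /\ forall x y, pp_le x y <-> f x \subset f y.

(* the digraph I_n : vertices v_0..v_n (type 'I_n.+1), edges (v_{i-1}, v_i) *)
Definition I_edges (n : nat) : {set 'I_n.+1 * 'I_n.+1} :=
  [set e : 'I_n.+1 * 'I_n.+1 | (e.2 : nat) == (e.1 : nat).+1].

Definition digraph_iso (V W : finType) (E : {set V * V}) (F : {set W * W}) : Prop :=
  exists f : V -> W, bijective f /\ forall u v, ((u, v) \in E) = ((f u, f v) \in F).

(* Main.v *)
Require Import Defs.
From mathcomp Require Import all_boot.
From mathcomp Require Import zify.
From Stdlib Require Import ProofIrrelevance.
Set Implicit Arguments. Unset Strict Implicit. Unset Printing Implicit Defensive.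

Lemma zip_map_iota (V : Type) (g : nat -> V) (L a : nat) :
  zip (map g (iota a L)) (behead (map g (iota a L))) =
  map (fun i => (g i, g i.+1)) (iota a L.-1).
Proof.
elim: L a => [|[|L] IH] a //=.
by have := IH a.+1; rewrite /= => ->.
Qed.

Lemma zip_nth (V : Type) (x0 : V) (s : seq V) :
  zip s (behead s) = map (fun i => (nth x0 s i, nth x0 s i.+1)) (iota 0 (size s).-1).
Proof.
have := zip_map_iota (nth x0 s) (size s) 0.
by rewrite -/(mkseq (nth x0 s) (size s)) mkseq_nth.
Qed.

Lemma mem_zipP (V : eqType) (x0 : V) (s : seq V) (e : V * V) :
  reflect (exists2 i, i.+1 < size s & e = (nth x0 s i, nth x0 s i.+1))
          (e \in zip s (behead s)).
Proof.
rewrite (zip_nth x0); apply: (iffP mapP) => [[i]|[i hi ->]].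
  by rewrite mem_iota add0n => /andP[_ hi] ->; exists i => //; lia.
by exists i => //; rewrite mem_iota add0n /=; lia.
Qed.

Lemma undir_sym (V : finType) (F : {set V*V}) : symmetric (undir F).
Proof. by move=> x y; rewrite /undir orbC. Qed.

Lemma all_iotaP (P : pred nat) j n :
  reflect (forall i, j <= i < j + n -> P i) (all P (iota j n)).
Proof.
apply: (iffP allP) => h i.
  by move=> hi; apply: h; rewrite mem_iota.
by rewrite mem_iota; exact: h.
Qed.
Lemma all_multipath (V : finType) (s : seq V) (F : {set V * V}) :
  uniq s -> (forall v, v \in s) ->
  (forall e, e \in F -> e \in zip s (behead s)) ->
  forall v, path_component F (component F v).
Proof.
move=> us cov hF v.
set N := size s.
pose g i := nth v s i.
pose good i := (g i, g i.+1) \in F.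
have gK : forall w, g (index w s) = w by move=> w; rewrite /g nth_index.
have ltN : forall w, index w s < N by move=> w; rewrite index_mem.
have gI : forall i, i < N -> index (g i) s = i by move=> i hi; rewrite /g index_uniq.
have Fe : forall e, e \in F -> exists2 i, i.+1 < N & e = (g i, g i.+1).
  by move=> e /hF /(mem_zipP v).
have sym := sym_connect_sym (undir_sym F).
have aux : forall i j, good j -> ~~ good i -> (j <= i) = (j.+1 <= i).
  move=> i j gj ngi; case: (eqVneq j i) => [eji|nji].
    by subst j; rewrite gj in ngi.
  by rewrite ltn_neqAle nji.
have cut : forall i x y, ~~ good i -> connect (undir F) x y ->
    (index x s <= i) = (index y s <= i).
  move=> i x y ngi; apply: (closed_connect (a := [pred x | index x s <= i])).
  move=> p q; rewrite /undir => /orP[] hpq; have [j hj [ep eq]] := Fe _ hpq;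
    rewrite ep eq !inE !gI //; try lia.
    by apply: aux => //; rewrite /good -ep -eq.
  by rewrite (aux i j) //; rewrite /good -ep -eq.
have up : forall j l, j <= l -> l < N -> (forall i, j <= i < l -> good i) ->
    connect (undir F) (g j) (g l).
  move=> j l; elim: l => [|l IH] hjl hl hg.
    by move: hjl; rewrite leqn0 => /eqP ->; exact: connect0.
  case: (eqVneq j l.+1) => [->|njl]; first exact: connect0.
  apply: (connect_trans (IH _ _ _)); try lia.
    by move=> i hi; apply: hg; lia.
  by apply: connect1; rewrite /undir; apply/orP; left; apply: (hg l); lia.
have down : forall j l, j <= l -> l < N -> connect (undir F) (g j) (g l) ->
    forall i, j <= i < l -> good i.
  move=> j l hjl hl hc i hi; apply/negPn/negP => ngi.
  by have := cut i _ _ ngi hc; rewrite !gI //; lia.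
set k := index v s.
have vk : v = g k by rewrite gK.
have hPk : exists j, (j <= k) && all good (iota j (k - j)).
  by exists k; rewrite leqnn subnn.
have hQk : exists j, (k <= j < N) && all good (iota k (j - k)).
  by exists k; rewrite leqnn subnn andbT; exact: ltN.
have hQub : forall j, (k <= j < N) && all good (iota k (j - k)) -> j <= N.
  by move=> j /andP[/andP[_ h] _]; lia.
case: (ex_minnP hPk) => a /andP[hak /all_iotaP hga] amin.
case: (ex_maxnP hQk hQub) => b /andP[/andP[hkb hbN] /all_iotaP hgb] bmax.
have charac : forall j, j < N -> (g j \in component F v) = (a <= j <= b).
  move=> j hj; rewrite inE vk; apply/idP/idP => [hc|/andP[haj hjb]].
    case: (leqP j k) => hjk.
      have hc' : connect (undir F) (g j) (g k) by rewrite sym.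
      have := down _ _ hjk (ltN v) hc' => hg.
      have : a <= j.
        apply: amin; rewrite hjk /=; apply/all_iotaP => i hi; apply: hg; lia.
      have : k <= b by apply: bmax; rewrite leqnn subnn andbT; exact: ltN.
      lia.
    have := down _ _ (ltnW hjk) hj hc => hg.
    have : j <= b.
      apply: bmax; rewrite (ltnW hjk) hj /=; apply/all_iotaP => i hi; apply: hg; lia.
    lia.
  case: (leqP j k) => hjk.
    rewrite sym; apply: up => //; first exact: ltN.
    move=> i hi; apply: hga; lia.
  apply: up => //; first lia.
  move=> i hi; apply: hgb; lia.
exists (map g (iota a (b - a).+1)); split.
- by rewrite size_map size_iota.
- rewrite map_inj_in_uniq ?iota_uniq // => x y; rewrite !mem_iota => hx hy.
  by move=> /eqP; rewrite /g nth_uniq //; try (rewrite -/N; lia); move/eqP.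
- apply/setP => w; rewrite inE; apply/mapP/idP => [[i hi ->]|hw].
    move: hi; rewrite mem_iota => hi; rewrite charac; lia.
  exists (index w s); last by rewrite gK.
  by move: hw; rewrite -{1}(gK w) charac // mem_iota; lia.
- move=> e; rewrite zip_map_iota /=; apply/idP/mapP.
    move=> /andP[/andP[eF e1] e2]; have [i hi ei] := Fe e eF; subst e.
    move: e1 e2 => /=; rewrite !charac //; try lia.
    by move=> h1 h2; exists i => //; rewrite mem_iota; lia.
  move=> [i]; rewrite mem_iota => hi ->; rewrite /= !charac; try lia.
  have -> : (g i, g i.+1) \in F.
    case: (leqP k i) => hki; [apply: hgb | apply: hga]; lia.
  apply/and3P; split; try lia; apply/and3P; split; try lia; done.
Qed.

Lemma ltn_topred (i n : nat) : i.+1 < n -> i < n.-1.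
Proof. lia. Qed.

Lemma ltn_predpred (i n : nat) : i < n.-1 -> i < n.
Proof. lia. Qed.

Lemma sig_eq (A : Type) (P : A -> Prop) (x y : {a | P a}) :
  proj1_sig x = proj1_sig y -> x = y.
Proof. case: x y => [a pa] [b pb] /= eab; subst b; f_equal; exact: proof_irrelevance. Qed.

Lemma PS_card (V : finType) (E : {set V * V}) (s : seq V) (x0 : V) :
  uniq s -> (forall e, (e \in E) = (e \in zip s (behead s))) ->
  #|E| = (size s).-1.
Proof.
move=> us hE.
have -> : #|E| = #|zip s (behead s)| by apply: eq_card => e; exact: hE.
have uz : uniq (zip s (behead s)).
  rewrite (zip_nth x0) map_inj_in_uniq ?iota_uniq // => i j.
  rewrite !mem_iota !add0n => hi hj [] /eqP; rewrite nth_uniq //.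
  - by move/eqP.
  - by case/andP: hi => _ /ltn_predpred.
  - by case/andP: hj => _ /ltn_predpred.
by rewrite (card_uniqP uz) (zip_nth x0) size_map size_iota.
Qed.

Lemma PS_iso (V : finType) (E : {set V * V}) (s : seq V) (x0 : V) :
  uniq s -> (forall v, v \in s) -> (forall e, (e \in E) = (e \in zip s (behead s))) ->
  digraph_iso E (I_edges (size s).-1).
Proof.
move=> us cov hE.
have s0 : 0 < size s.
  by have := cov x0; rewrite -index_mem => h; exact: (leq_ltn_trans (leq0n _) h).
have ltS : forall w, index w s < ((size s).-1).+1 by move=> w; rewrite prednK // index_mem.
exists (fun w => inord (index w s)); split.
  exists (fun i : 'I_(size s).-1.+1 => nth x0 s i).
    by move=> w /=; rewrite inordK // nth_index.
  move=> i /=; rewrite index_uniq ?inord_val //.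
  by have := ltn_ord i; move: (i : nat) => i'; rewrite prednK.
move=> u w; rewrite hE inE /= !inordK //; apply/(mem_zipP x0)/eqP.
  move=> [i hi [-> ->]]; rewrite !index_uniq //; lia.
move=> h; exists (index u s).
  by rewrite -h index_mem.
by rewrite -h !nth_index.
Qed.

Lemma PS_bool (V : finType) (E : {set V * V}) (s : seq V) (x0 : V) :
  uniq s -> (forall v, v \in s) -> (forall e, (e \in E) = (e \in zip s (behead s))) ->
  iso_Boolean E (size s).-1.
Proof.
move=> us cov hE.
set n := (size s).-1.
pose g i := nth x0 s i.
pose pe (i : 'I_n) := (g i, g i.+1).
have ltn1 : forall i : 'I_n, i.+1 < size s by move=> i; have := ltn_ord i; rewrite /n; lia.
have peE : forall i : 'I_n, pe i \in E.
  by move=> i; rewrite hE; apply/(mem_zipP x0); exists i.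
have peI : injective pe.
  move=> i j [] /eqP; rewrite /g nth_uniq //; try exact: ltnW (ltn1 _).
  by move=> /eqP /val_inj.
have mpX : forall X : {set 'I_n}, multipath E (pe @: X).
  move=> X; split.
    by apply/subsetP => e /imsetP [i _ ->]; exact: peE.
  by apply: (all_multipath us cov) => e /imsetP [i _ ->]; rewrite -hE; exact: peE.
pose h (X : {set 'I_n}) : path_poset E := exist _ (pe @: X) (mpX X).
pose f (F : path_poset E) := [set i | pe i \in proj1_sig F].
have EF : forall e, e \in E -> exists i, e = pe i.
  move=> e; rewrite hE => /(mem_zipP x0) [i hi ->].
  have hin : i < n by exact: ltn_topred.
  by exists (Ordinal hin).
exists f; split.
  exists h.
  - move=> [F [FE mF]]; apply: sig_eq => /=; apply/setP => e.
    apply/imsetP/idP => [[i]|eF].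
      by rewrite inE /= => ? ->.
    have [i ei] := EF e (subsetP FE e eF).
    by exists i; rewrite // inE /= -ei.
  - move=> X; apply/setP => i; rewrite inE /=.
    by apply/imsetP/idP => [[j jX /peI ->]//|iX]; exists i.
move=> [F [FE mF]] [G [GE mG]]; rewrite /pp_le /=; split.
  move=> FG; apply/subsetP => i; rewrite !inE /=; exact: (subsetP FG).
move=> fFG; apply/subsetP => e eF.
have [i ei] := EF e (subsetP FE e eF); subst e.
have : i \in f (exist _ F (conj FE mF)) by rewrite inE.
by move/(subsetP fFG); rewrite inE.
Qed.

Lemma part1 (V : finType) (E : {set V * V}) (n : nat) :
  loopless E -> connected_digraph E -> #|E| = n -> has_maximum E ->
  iso_Boolean E n /\ digraph_iso E (I_edges n).
Proof.
move=> ll [V0 conn] cE [[M [ME mM]] Mmax].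
have EM : E \subset M.
  apply/subsetP => -[x y] exy.
  have xy : x != y := ll _ exy.
  pose s := x :: y :: [seq w <- enum V | (w != x) && (w != y)].
  have us : uniq s.
    rewrite /s /= filter_uniq ?enum_uniq // andbT !inE !mem_filter !negb_or.
    by rewrite !eqxx xy /= andbF.
  have cov : forall w, w \in s.
    move=> w; rewrite /s !inE mem_filter mem_enum andbT.
    by case: (w == x); case: (w == y).
  have mp : multipath E [set (x, y)].
    split; first by rewrite sub1set.
    apply: (all_multipath us cov) => e; rewrite inE => /eqP ->.
    by rewrite /s /= inE eqxx.
  by have := Mmax (exist _ _ mp); rewrite /pp_le /= sub1set.
have ME' : M = E by apply/eqP; rewrite eqEsubset ME EM.
subst M.
case/card_gt0P: V0 => v _.
have [s [s0 us sC sE]] := mM v.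
have compT : component E v = setT by apply/setP => w; rewrite !inE conn.
rewrite compT in sC sE.
have cov : forall w, w \in s by move=> w; have := in_setT w; rewrite -sC inE.
have hE : forall e, (e \in E) = (e \in zip s (behead s)).
  by move=> e; rewrite -sE !inE !andbT.
rewrite -cE (PS_card v us hE); split; [exact: PS_bool v us cov hE | exact: PS_iso v us cov hE].
Qed.

Theorem proposition2p34 :
  (forall (V : finType) (E : {set V * V}) (n : nat),
     loopless E -> connected_digraph E -> #|E| = n ->
     has_maximum E ->
     iso_Boolean E n /\ digraph_iso E (I_edges n)) /\
  (forall (V : finType) (E : {set V * V}),
     loopless E -> connected_digraph E ->
     ((exists m : nat, iso_Boolean E m) <->
      (exists m : nat, digraph_iso E (I_edges m)))).
Proof.
split; first exact: part1.
move=> V E ll cd; split.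
  case=> m [f [[g fg gf] fmono]].
  have hm : has_maximum E.
    by exists (g setT) => F; apply/fmono; rewrite gf; exact: subsetT.
  by exists #|E|; exact: (part1 ll cd erefl hm).2.
case=> m [phi [[psi pp1 pp2] hphi]].
case: cd => V0 _; case/card_gt0P: V0 => x0 _.
pose s := map (fun i => psi (inord i)) (iota 0 m.+1).
have nthS : forall i, i < m.+1 -> nth x0 s i = psi (inord i).
  by move=> i hi; rewrite (nth_map 0) ?size_iota // nth_iota.
have ss : size s = m.+1 by rewrite size_map size_iota.
have us : uniq s.
  rewrite map_inj_in_uniq ?iota_uniq // => i j; rewrite !mem_iota !add0n => hi hj.
  move/(can_inj pp2) => h; have := congr1 val h; by rewrite /= !inordK.
have cov : forall w, w \in s.
  move=> w; rewrite -(pp1 w); apply/mapP; exists (phi w : nat).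
    by rewrite mem_iota ltn_ord.
  by rewrite inord_val.
have hE : forall e, (e \in E) = (e \in zip s (behead s)).
  move=> [u v]; rewrite hphi inE /=; apply/eqP/(mem_zipP x0).
    move=> h; exists (phi u : nat).
      by rewrite ss -h ltn_ord.
    by rewrite !nthS ?inord_val ?pp1 // -h ?inord_val ?pp1 // ltn_ord.
  move=> [i]; rewrite ss => hi; rewrite (nthS i.+1 hi) (nthS i (ltnW hi)) => -[-> ->].
  rewrite !pp2 !inordK //; exact: ltnW.
exists (size s).-1; exact: PS_bool x0 us cov hE.
Qed.
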